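(* Fix the minority ratio $r$ of the Biased Preferential Attachment Model (BPAM) described in the context. For $x\in(0,1]$ define $$F^{(t)}(x)=\frac{MF^{(t)}(R,x,r)}{MF^{(t)}(B,x,r)}=\frac{q_{RB}(x)}{q_{BB}(x)},$$ where $x$ is the homophily parameter, and $q_{RB}(x), q_{BB}(x)$ are as defined in the context with $\rho=x$ and with $\alpha=\alpha(x)$ the asymptotic red edge fraction for that homophily parameter. Then for every integer $t\geq 1$, $F^{(t)}$ is an increasing function on $(0,1]$ and $F^{(t)}(1)=1$.
   Context: The BPAM with two communities (red $R$, blue $B$) grows a directed network one node at a time. A new node is labeled $R$ with probability $r$ and $B$ with probability $1-r$, where $0< r\le 1/2$. The new node picks a target with probability proportional to current degree. If the two labels differ, the edge is accepted with probability $\rho\in[0,1]$ (the homophily parameter); otherwise the choice is repeated until an edge forms. This is repeated $d$ times, so every node has outdegree $d$. Let $\alpha=\alpha(\rho)$ be the limit as $N\to\infty$ of the expected fraction of total degree belonging to red nodes. It is characterized as the equilibrium (fixed point) satisfying $$\alpha=\tfrac12\Big(r+\tfrac{r\alpha}{\alpha+\rho-\alpha\rho}+\tfrac{\alpha\rho(1-r)}{\alpha\rho+1-\alpha}\Big),$$ and it satisfies $\alpha<r$. Define $$p^{out}_{RB}=\frac{\rho(1-\alpha)}{\alpha+\rho(1-\alpha)},\qquad p^{out}_{BB}=\frac{1-\alpha}{\rho\alpha+1-\alpha}.$$ Let $D_B=\frac{r\rho}{\alpha+\rho(1-\alpha)}+\frac{1-r}{\alpha\rho+1-\alpha}$ and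 $D_R=\frac{r}{\alpha+\rho(1-\alpha)}+\frac{\rho(1-r)}{\alpha\rho+1-\alpha}$. Define $$p^{in}_{BB}=\frac{(1-r)/(\alpha\rho+1-\alpha)}{D_B},\qquad p^{in}_{BR}=\frac{\rho r/(\alpha+\rho(1-\alpha))}{D_B},$$ $$p^{in}_{RR}=\frac{r/(\alpha+\rho(1-\alpha))}{D_R},\qquad p^{in}_{RB}=\frac{\rho(1-r)/(\alpha\rho+1-\alpha)}{D_R}.$$ Set $$q_{BB}=p^{in}_{BB}p^{out}_{BB}+p^{in}_{BR}p^{out}_{RB},\qquad q_{RB}=p^{in}_{RB}p^{out}_{BB}+p^{in}_{RR}p^{out}_{RB}.$$ In the paper's mean-field analysis of HITS, the multiplicative factors are $MF^{(t)}(R)=q_{RB}\tilde d^{in}_t(B)$ and $MF^{(t)}(B)=q_{BB}\tilde d^{in}_t(B)$. Here $\tilde d^{in}_t(B)=\sum_{u\in B}(d^{in}(u))^t/\sum_{u\in B}d^{in}(u)$ is the size-biased $t$-th indegree moment of the blue nodes, so their ratio is $q_{RB}/q_{BB}$. *)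

(* Defs.v *)
From Stdlib Require Import Reals.
Open Scope R_scope.

(* Fixed-point equation characterizing the asymptotic red degree fraction alpha(rho). *)
Definition alpha_eq (r rho a : R) : Prop :=
  a = / 2 * (r + r * a / (a + rho - a * rho) + a * rho * (1 - r) / (a * rho + 1 - a)).

Definition p_out_RB (rho a : R) : R := rho * (1 - a) / (a + rho * (1 - a)).
Definition p_out_BB (rho a : R) : R := (1 - a) / (rho * a + 1 - a).

Definition D_B (r rho a : R) : R := r * rho / (a + rho * (1 - a)) + (1 - r) / (a * rho + 1 - a).
Definition D_R (r rho a : R) : R := r / (a + rho * (1 - a)) + rho * (1 - r) / (a * rho + 1 - a).

Definition p_in_BB (r rho a : R) : R := ((1 - r) / (a * rho + 1 - a)) / D_B r rho a.
Definition p_in_BR (r rho a : R) : R := (rho * r / (a + rho * (1 - a))) / D_B r rho a.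
Definition p_in_RR (r rho a : R) : R := (r / (a + rho * (1 - a))) / D_R r rho a.
Definition p_in_RB (r rho a : R) : R := (rho * (1 - r) / (a * rho + 1 - a)) / D_R r rho a.

Definition q_BB (r rho a : R) : R :=
  p_in_BB r rho a * p_out_BB rho a + p_in_BR r rho a * p_out_RB rho a.
Definition q_RB (r rho a : R) : R :=
  p_in_RB r rho a * p_out_BB rho a + p_in_RR r rho a * p_out_RB rho a.

(* F^(t)(x) = MF^(t)(R,x,r) / MF^(t)(B,x,r) = q_RB(x) / q_BB(x); the common factor
   tilde d^in_t(B) cancels, so the value does not depend on t. *)
Definition F (t : nat) (r : R) (alpha : R -> R) (x : R) : R :=
  q_RB r x (alpha x) / q_BB r x (alpha x).

(* Main.v *)
Require Import Defs.
From Stdlib Require Import Reals Lra Lia Psatz.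
From Coquelicot Require Import Coquelicot.
Open Scope R_scope.
Definition Mk p k := p*k^3 + p*k^2 - 2*k^2 + 2*k - (1-p)*k - (1-p).
Definition Mk' p k := 3*p*k^2 + 2*p*k - 4*k + 2 - (1-p).
Definition Pc p x k := k*(1-k)*x^2 + Mk p k * x + 2*k*((1-p)-p*k).
Definition Nn x k := (1 - k*x)*(2*k + (k-1)*x).
Definition Dd x k := (k+1)*(2*k - x*(k^2+1)).
Definition Pxf p x k := 2*k*(1-k)*x + Mk p k.
Definition Pyf p x k := (1-2*k)*x^2 + Mk' p k * x + 2*(1-p) - 4*p*k.
Definition f1 p k := (1-p) + p*k^2.
Definition f2 p x k := (1-p) + x*p*k.
Definition f3 p x k := (1-p) + x^2*p*k^2.
Definition f4 p x k := p*k + x*(1-p).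
Definition Gf p x k := x * f1 p k * f2 p x k / (f3 p x k * f4 p x k).
Definition Sk p x k := 2*k*f2 p x k*f4 p x k - f1 p k * f3 p x k.
Definition Sx p x k := f2 p x k * f3 p x k + x*f4 p x k*f3 p x k - 2*x^2*k*f4 p x k*f2 p x k.
Definition Jp p x k := p*(1-p)*(1-x^2)*Sk p x k*x*Pxf p x k - p*k*Sx p x k*f1 p k*Pyf p x k.
Definition rpoly x k := (64*k^5 - 256*x*k^4 + 288*x*k^5 - 160*x*k^6 + 400*x^2*k^3 - 848*x^2*k^4 + 1088*x^2*k^5 - 720*x^2*k^6 + 144*x^2*k^7 - 304*x^3*k^2 + 1008*x^3*k^3 - 1984*x^3*k^4 + 2264*x^3*k^5 - 1688*x^3*k^6 + 760*x^3*k^7 - 56*x^3*k^8 + 112*x^4*k - 616*x^4*k^2 + 1612*x^4*k^3 - 2636*x^4*k^4 + 3104*x^4*k^5 - 2624*x^4*k^6 + 1404*x^4*k^7 - 428*x^4*k^8 + 8*x^4*k^9 - 16*x^5 + 192*x^5*k - 668*x^5*k^2 + 1512*x^5*k^3 - 2316*x^5*k^4 + 2808*x^5*k^5 - 2508*x^5*k^6 + 1696*x^5*k^7 - 700*x^5*k^8 + 128*x^5*k^9 - 24*x^6 + 140*x^6*k - 450*x^6*k^2 + 886*x^6*k^3 - 1354*x^6*k^4 + 1558*x^6*k^5 - 1574*x^6*k^6 + 1218*x^6*k^7 - 646*x^6*k^8 + 198*x^6*k^9 - 16*x^6*k^10 - 12*x^7 + 64*x^7*k - 200*x^7*k^2 +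 360*x^7*k^3 - 440*x^7*k^4 + 512*x^7*k^5 - 568*x^7*k^6 + 528*x^7*k^7 - 356*x^7*k^8 + 136*x^7*k^9 - 24*x^7*k^10 - 2*x^8 + 26*x^8*k - 72*x^8*k^2 + 96*x^8*k^3 - 68*x^8*k^4 + 40*x^8*k^5 - 84*x^8*k^6 + 136*x^8*k^7 - 114*x^8*k^8 + 54*x^8*k^9 - 12*x^8*k^10 + 6*x^9*k - 22*x^9*k^2 + 24*x^9*k^3 + 4*x^9*k^4 - 28*x^9*k^5 + 16*x^9*k^6 + 16*x^9*k^7 - 28*x^9*k^8 + 14*x^9*k^9 - 2*x^9*k^10 - 2*x^10*k^2 + 6*x^10*k^3 - 2*x^10*k^4 - 10*x^10*k^5 + 10*x^10*k^6 + 2*x^10*k^7 - 6*x^10*k^8 + 2*x^10*k^9).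
Definition rs t w := (256*w^3 + 1408*w^4 + 3328*w^5 + 4416*w^6 + 3584*w^7 + 1792*w^8 + 512*w^9 + 64*w^10 + 768*t*w^2 + 6912*t*w^3 + 23744*t*w^4 + 43520*t*w^5 + 48032*t*w^6 + 33184*t*w^7 + 14048*t*w^8 + 3296*t*w^9 + 320*t*w^10 + 768*t^2*w + 11904*t^2*w^2 + 61952*t^2*w^3 + 159616*t^2*w^4 + 238624*t^2*w^5 + 221424*t^2*w^6 + 128992*t^2*w^7 + 45296*t^2*w^8 + 8544*t^2*w^9 + 640*t^2*w^10 + 256*t^3 + 8704*t^3*w + 75264*t^3*w^2 + 285248*t^3*w^3 + 587872*t^3*w^4 + 729184*t^3*w^5 + 566280*t^3*w^6 + 273448*t^3*w^7 + 77728*t^3*w^8 + 11456*t^3*w^9 + 640*t^3*w^10 + 2304*t^4 + 43008*t^4*w + 265792*t^4*w^2 + 792368*t^4*w^3 + 1337608*t^4*w^4 + 1376520*t^4*w^5 + 882208*t^4*w^6 + 344616*t^4*w^7 + 76592*t^4*w^8 + 8384*t^4*w^9 + 320*t^4*w^10 + 9280*t^5 + 123104*t^5*w + 591632*t^5*w^2 + 1428960*t^5*w^3 + 1984292*t^5*w^4 + 1675824*t^5*w^5 + 866196*t^5*w^6 + 263904*t^5*w^7 + 43280*t^5*w^8 + 3168*t^5*w^9 + 64*t^5*w^10 + 22144*t^6 + 227536*t^6*w + 878728*t^6*w^2 + 1732544*t^6*w^3 + 1963152*t^6*w^4 + 1332284*t^6*w^5 + 535620*t^6*w^6 + 119824*t^6*w^7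 + 12960*t^6*w^8 + 480*t^6*w^9 + 34768*t^7 + 285776*t^7*w + 894808*t^7*w^2 + 1431352*t^7*w^3 + 1298222*t^7*w^4 + 683640*t^7*w^5 + 201268*t^7*w^6 + 29496*t^7*w^7 + 1584*t^7*w^8 + 37648*t^8 + 249496*t^8*w + 629856*t^8*w^2 + 802772*t^8*w^3 + 563532*t^8*w^4 + 217020*t^8*w^5 + 41756*t^8*w^6 + 3016*t^8*w^7 + 28636*t^9 + 151990*t^9*w + 303870*t^9*w^2 + 298624*t^9*w^3 + 153102*t^9*w^4 + 38528*t^9*w^5 + 3648*t^9*w^6 + 15280*t^10 + 63722*t^10*w + 97624*t^10*w^2 + 69864*t^10*w^3 + 23412*t^10*w^4 + 2904*t^10*w^5 + 5602*t^11 + 17728*t^11*w + 19648*t^11*w^2 + 9176*t^11*w^3 + 1520*t^11*w^4 + 1344*t^12 + 3036*t^12*w + 2180*t^12*w^2 + 504*t^12*w^3 + 190*t^13 + 272*t^13*w + 96*t^13*w^2 + 12*t^14 + 8*t^14*w).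
Definition pyp x k := (- 4*k^2 + 4*x*k - 4*x*k^2 + 4*x*k^3 - 2*x^2 + 2*x^2*k - 4*x^2*k^2 + 2*x^2*k^3 - 2*x^2*k^4 - x^3 + 2*x^3*k + 2*x^3*k^2 + 2*x^3*k^3 - x^3*k^4).
Definition pys t w := (8*w + 8*w^2 + 4*w^3 + 8*t + 32*t*w + 28*t*w^2 + 8*t*w^3 + 28*t^2 + 50*t^2*w + 28*t^2*w^2 + 4*t^2*w^3 + 30*t^3 + 30*t^3*w + 8*t^3*w^2 + 13*t^4 + 6*t^4*w + 2*t^5).

Lemma Pc_lin p x k : Pc p x k = Nn x k - p * Dd x k.
Proof. unfold Pc, Nn, Dd, Mk. ring. Qed.

Lemma J_id x k : k+1 <> 0 -> 2*k - x*(k^2+1) <> 0 ->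
  Jp (Nn x k / Dd x k) x k * (Dd x k)^5 = k^4*(k+1)*(1-x*k)^2*(k-x)*(1+x)^2 * rpoly x k.
Proof. intros H1 H2. unfold Jp, Sk, Sx, f1,f2,f3,f4, Pxf, Pyf, Mk, Mk', rpoly, Nn, Dd. field. auto. Qed.

Lemma r_id t w : 1+t+w <> 0 -> rpoly (1/(1+t+w)) (1+t) * (1+t+w)^10 = rs t w.
Proof. intros H. unfold rpoly, rs. field. exact H. Qed.

Lemma Py_id x k : k+1 <> 0 -> 2*k - x*(k^2+1) <> 0 -> Pyf (Nn x k / Dd x k) x k * Dd x k = pyp x k.
Proof. intros H1 H2. unfold Pyf, Mk', pyp, Nn, Dd. field. auto. Qed.
Lemma py_id t w : 1+t+w <> 0 -> pyp (1/(1+t+w)) (1+t) * (1+t+w)^3 = - pys t w.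
Proof. intros H. unfold pyp, pys. field. exact H. Qed.
Lemma Px_id x k : k+1 <> 0 -> 2*k - x*(k^2+1) <> 0 -> Pxf (Nn x k / Dd x k) x k * Dd x k = (k-1)*(k+1)*k*(-2*k - 4*x*k + x^2 + x^2*k^2).
Proof. intros H1 H2. unfold Pxf, Mk, Nn, Dd. field. auto. Qed.
Definition Dl p k := Mk p k ^2 - 8*k^2*(1-k)*((1-p)-p*k).
Definition rho p k := 4*k*((1-p)-p*k)/(- Mk p k + sqrt (Dl p k)).

Lemma rho_facts p k : 0<p -> 1<k -> 0 < (1-p) - p*k ->
  0 < Dl p k /\ 0 < - Mk p k + sqrt (Dl p k) /\ 0 < rho p k /\ Pc p (rho p k) k = 0 /\ rho p k * k < 1.
Proof.
  intros Hp Hk Hc.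
  assert (HD: Mk p k ^2 < Dl p k).
  { unfold Dl. assert (0 < 8*k^2*(k-1)*((1-p)-p*k)).
    { repeat apply Rmult_lt_0_compat; try lra; try nra. } nra. }
  assert (HD0: 0 < Dl p k) by nra.
  set (s := sqrt (Dl p k)).
  assert (Hs0: 0 <= s) by apply sqrt_pos.
  assert (Hs2: s*s = Dl p k) by (apply sqrt_sqrt; lra).
  assert (Hden: 0 < - Mk p k + s) by nra.
  assert (Hr: 0 < rho p k).
  { unfold rho. fold s. apply Rdiv_lt_0_compat; [|lra]. nra. }
  assert (HP: Pc p (rho p k) k = 0).
  { unfold rho. fold s.
    apply (Rmult_eq_reg_r ((- Mk p k + s)^2)); [|apply pow_nonzero; lra].
    rewrite Rmult_0_l.
    transitivity (2*k*((1-p)-p*k)*(s*s - Dl p k)).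
    - unfold Pc, Dl. field. lra.
    - rewrite Hs2. ring. }
  repeat split; try lra.
  set (r := rho p k) in *. clearbody r.
  assert (HQ: k * Pc p (/k) k = p*(1+k)^2*(1-k)).
  { unfold Pc, Mk. field. lra. }
  destruct (Rlt_or_le (r*k) 1) as [H|H]; [exact H|exfalso].
  assert (Hz: /k <= r).
  { apply (Rmult_le_reg_r k); [lra|]. rewrite Rinv_l; lra. }
  assert (Iden: r * Pc p (/k) k - /k * Pc p r k = (r - /k)*(2*k*((1-p)-p*k) - k*(1-k)*r*/k)).
  { unfold Pc. ring. }
  rewrite HP in Iden.
  assert (0 < /k) by (apply Rinv_0_lt_compat; lra).
  assert (0 <= (r - /k)*(2*k*((1-p)-p*k) - k*(1-k)*r*/k)).
  { apply Rmult_le_pos; [lra|]. assert (0 < k*(k-1)*r*/k) by (repeat apply Rmult_lt_0_compat; lra).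
    assert (0 < 2*k*((1-p)-p*k)) by nra. lra. }
  assert (0 <= Pc p (/k) k).
  { assert (0 <= r * Pc p (/k) k) by lra.
    destruct (Rle_or_lt 0 (Pc p (/k) k)) as [h|h]; [exact h|]. nra. }
  assert (0 <= k * Pc p (/k) k) by (apply Rmult_le_pos; lra).
  assert (0 < p*(1+k)^2*(k-1)) by (apply Rmult_lt_0_compat; [apply Rmult_lt_0_compat; [lra|apply pow_lt; lra]|lra]).
  lra.
Qed.

Ltac pos := repeat first [ lra | apply pow_lt | apply Rmult_lt_0_compat | apply Rplus_lt_0_compat ].

Lemma rs_pos t w : 0 < t -> 0 < w -> 0 < rs t w.
Proof. intros. unfold rs. pos. Qed.
Lemma pys_pos t w : 0 < t -> 0 < w -> 0 < pys t w.
Proof. intros. unfold pys. pos. Qed.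

Lemma tw_sub x k : 0 < x -> 1/(1+(k-1)+(1/x-k)) = x /\ 1 + (k-1) = k.
Proof. intros. split; [field; lra | ring]. Qed.

Lemma rpoly_pos x k : 0 < x -> 1 < k -> k*x < 1 -> 0 < rpoly x k.
Proof.
  intros Hx Hk Hkx.
  assert (Hw: 0 < 1/x - k).
  { assert (k < 1/x); [|lra]. apply (Rmult_lt_reg_r x); [lra|]. field_simplify; lra. }
  assert (Ex: x = 1/(1+(k-1)+(1/x-k))) by (field; lra).
  assert (Ek: k = 1+(k-1)) by ring.
  set (t := k-1) in *. set (w := 1/x-k) in *.
  assert (0 < t) by (unfold t; lra).
  clearbody t w. rewrite Ek, Ex. clear Ex Ek.
  assert (0 < 1+t+w) by lra.
  assert (Hid := r_id t w ltac:(lra)).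
  assert (0 < rs t w) by (apply rs_pos; lra).
  assert (0 < (1+t+w)^10) by (apply pow_lt; lra).
  destruct (Rlt_or_le 0 (rpoly (1 / (1 + t + w)) (1 + t))) as [h|h]; [exact h|].
  nra.
Qed.

Lemma pyp_neg x k : 0 < x -> 1 < k -> k*x < 1 -> pyp x k < 0.
Proof.
  intros Hx Hk Hkx.
  assert (Hw: 0 < 1/x - k).
  { assert (k < 1/x); [|lra]. apply (Rmult_lt_reg_r x); [lra|]. field_simplify; lra. }
  assert (Ex: x = 1/(1+(k-1)+(1/x-k))) by (field; lra).
  assert (Ek: k = 1+(k-1)) by ring.
  set (t := k-1) in *. set (w := 1/x-k) in *.
  assert (0 < t) by (unfold t; lra).
  clearbody t w. rewrite Ek, Ex. clear Ex Ek.
  assert (Hid := py_id t w ltac:(lra)).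
  assert (0 < pys t w) by (apply pys_pos; lra).
  assert (0 < (1+t+w)^3) by (apply pow_lt; lra).
  destruct (Rlt_or_le (pyp (1 / (1 + t + w)) (1 + t)) 0) as [h|h]; [exact h|].
  nra.
Qed.

Lemma region p x k : 0 < p -> 0 < x < 1 -> 1 < k -> k*x < 1 -> Pc p x k = 0 ->
  0 < Dd x k /\ 0 < Jp p x k /\ Pxf p x k < 0 /\ Pyf p x k < 0.
Proof.
  intros Hp Hx Hk Hkx HP.
  assert (HN: 0 < Nn x k) by (unfold Nn; apply Rmult_lt_0_compat; nra).
  rewrite Pc_lin in HP.
  assert (HD: 0 < Dd x k).
  { destruct (Rlt_or_le 0 (Dd x k)) as [h|h]; [exact h|]. nra. }
  assert (H1: k+1 <> 0) by lra.
  assert (H2: 0 < 2*k - x*(k^2+1)).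
  { unfold Dd in HD. destruct (Rlt_or_le 0 (2*k - x*(k^2+1))) as [h|h]; [exact h|]. nra. }
  assert (Ep: p = Nn x k / Dd x k) by (replace (Nn x k) with (p * Dd x k) by lra; field; lra).
  split; [exact HD|]. rewrite Ep.
  split; [|split].
  - assert (E := J_id x k H1 ltac:(lra)).
    assert (0 < rpoly x k) by (apply rpoly_pos; lra).
    assert (0 < k^4*(k+1)*(1-x*k)^2*(k-x)*(1+x)^2 * rpoly x k) by pos.
    assert (0 < Dd x k ^5) by (apply pow_lt; lra).
    destruct (Rlt_or_le 0 (Jp (Nn x k / Dd x k) x k)) as [h|h]; [exact h|]. nra.
  - assert (E := Px_id x k H1 ltac:(lra)). unfold Dd in E.
    assert (0 < (k-1)*(k+1)*k) by pos.
    assert (-2*k - 4*x*k + x^2 + x^2*k^2 < 0) by nra.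
    assert (0 < (k + 1) * (2 * k - x * (k ^ 2 + 1))) by pos.
    destruct (Rlt_or_le (Pxf (Nn x k / ((k + 1) * (2 * k - x * (k ^ 2 + 1)))) x k) 0) as [h|h]; [unfold Dd; exact h|]. nra.
  - assert (E := Py_id x k H1 ltac:(lra)). unfold Dd in E.
    assert (pyp x k < 0) by (apply pyp_neg; lra).
    assert (0 < (k + 1) * (2 * k - x * (k ^ 2 + 1))) by pos.
    destruct (Rlt_or_le (Pyf (Nn x k / ((k + 1) * (2 * k - x * (k ^ 2 + 1)))) x k) 0) as [h|h]; [unfold Dd; exact h|]. nra.
Qed.
Lemma near_k p k (P : R -> Prop) : 0 < p -> 1 < k -> 0 < (1-p) - p*k ->
  (forall t, 1 < t -> 0 < (1-p) - p*t -> P t) -> locally k P.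
Proof.
  intros Hp Hk Hc HP.
  assert (Heps: 0 < Rmin (k-1) (((1-p)-p*k)/p)).
  { apply Rmin_pos; [lra|apply Rdiv_lt_0_compat; lra]. }
  exists (mkposreal _ Heps). intros t Ht.
  change (Rabs (t - k) < Rmin (k-1) (((1-p)-p*k)/p)) in Ht.
  assert (H1 := Rmin_l (k-1) (((1-p)-p*k)/p)).
  assert (H2 := Rmin_r (k-1) (((1-p)-p*k)/p)).
  apply Rabs_def2 in Ht. destruct Ht as [Ha Hb].
  apply HP; [lra|].
  assert (t - k < ((1-p)-p*k)/p) by lra.
  assert (p*(t-k) < (1-p)-p*k).
  { apply (Rmult_lt_reg_r (/p)); [apply Rinv_0_lt_compat; lra|].
    replace (p*(t-k)*/p) with (t-k) by (field; lra). exact H. }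
  nra.
Qed.

Lemma rho_ex p k : 0<p -> 1<k -> 0<(1-p)-p*k -> ex_derive (rho p) k.
Proof.
  intros Hp Hk Hc. destruct (rho_facts p k Hp Hk Hc) as (H1 & H2 & _).
  unfold rho, Dl in *. unfold Mk in *. auto_derive. repeat split.
  - eapply Rlt_le_trans; [exact H1|]; right; ring.
  - apply Rgt_not_eq. eapply Rlt_le_trans; [exact H2|]. right. apply (f_equal2 Rplus); [ring| apply f_equal; ring].
Qed.

Lemma rho_deriv p k : 0<p -> 1<k -> 0<(1-p)-p*k ->
  Pxf p (rho p k) k * Derive (rho p) k + Pyf p (rho p k) k = 0.
Proof.
  intros Hp Hk Hc.
  assert (E1: is_derive (fun t => Pc p (rho p t) t) k 0).
  { apply is_derive_ext_loc with (f := fun _ => 0).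
    - apply (near_k p k); auto. intros t Ht Hct.
      destruct (rho_facts p t Hp Ht Hct) as (_ & _ & _ & h & _). symmetry; exact h.
    - apply is_derive_Reals. apply derivable_pt_lim_const. }
  assert (E2: is_derive (fun t => Pc p (rho p t) t) k (Pxf p (rho p k) k * Derive (rho p) k + Pyf p (rho p k) k)).
  { unfold Pc, Pxf, Pyf, Mk, Mk'. auto_derive.
    - repeat split; auto using rho_ex.
    - change (Derive (fun x => rho p x) k) with (Derive (rho p) k). ring. }
  apply is_derive_unique in E1. apply is_derive_unique in E2. congruence.
Qed.

Definition Phi p k := Gf p (rho p k) k.
Definition Gx p x k := Gf p x k * (p*k*Sx p x k/(x*f4 p x k*f2 p x k*f3 p x k)).
Definition Gy p x k := Gf p x k * (p*(1-p)*(1-x^2)*Sk p x k/(f1 p k*f3 p x k*f2 p x k*f4 p x k)).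

Lemma f_pos p x k : 0 < p < 1 -> 0 < x -> 0 < k ->
  0 < f1 p k /\ 0 < f2 p x k /\ 0 < f3 p x k /\ 0 < f4 p x k.
Proof. intros. unfold f1, f2, f3, f4. repeat split; pos. Qed.

Lemma Phi_deriv p k : 0 < p < 1 -> 1 < k -> 0 < (1-p)-p*k ->
  is_derive (Phi p) k (Gx p (rho p k) k * Derive (rho p) k + Gy p (rho p k) k).
Proof.
  intros Hp Hk Hc.
  destruct (rho_facts p k ltac:(lra) Hk Hc) as (_ & _ & Hr & _ & _).
  destruct (f_pos p (rho p k) k Hp Hr ltac:(lra)) as (F1 & F2 & F3 & F4).
  assert (Hex := rho_ex p k ltac:(lra) Hk Hc).
  unfold Phi, Gx, Gy, Gf, Sx, Sk.
  unfold f1, f2, f3, f4 in *.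
  auto_derive.
  - repeat split; auto. apply Rgt_not_eq. apply Rlt_gt. apply Rmult_lt_0_compat; lra.
  - change (Derive (fun x => rho p x) k) with (Derive (rho p) k).
    set (d := Derive (rho p) k). set (r := rho p k) in *. clearbody r.
    field. repeat split; lra.
Qed.

Lemma derivs_neg p k : 0 < p < 1 -> 1 < k -> 0 < (1-p)-p*k ->
  Derive (rho p) k < 0 /\ Gx p (rho p k) k * Derive (rho p) k + Gy p (rho p k) k < 0.
Proof.
  intros Hp Hk Hc.
  destruct (rho_facts p k ltac:(lra) Hk Hc) as (_ & _ & Hr & HP & Hrk).
  assert (Hr1: rho p k < 1).
  { assert (rho p k * 1 < rho p k * k) by (apply Rmult_lt_compat_l; lra). lra. }
  assert (HE := rho_deriv p k ltac:(lra) Hk Hc).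
  destruct (f_pos p (rho p k) k Hp Hr ltac:(lra)) as (F1 & F2 & F3 & F4).
  destruct (region p (rho p k) k ltac:(lra) ltac:(split; lra) Hk ltac:(lra) HP) as (_ & HJ & HPx & HPy).
  set (d := Derive (rho p) k) in *. set (x := rho p k) in *. clearbody d x.
  assert (Ed: d = - Pyf p x k / Pxf p x k).
  { apply (Rmult_eq_reg_r (Pxf p x k)); [|lra]. unfold Rdiv. rewrite Rmult_assoc, Rinv_l; lra. }
  split.
  - rewrite Ed. unfold Rdiv. 
    assert (0 < / - Pxf p x k) by (apply Rinv_0_lt_compat; lra).
    replace (- Pyf p x k * / Pxf p x k) with (Pyf p x k * / - Pxf p x k) by (field; lra).
    nra.
  - assert (Eq: Gx p x k * d + Gy p x k = - (Gf p x k * Jp p x k / (x*f1 p k*f2 p x k*f3 p x k*f4 p x k*(- Pxf p x k)))).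
    { rewrite Ed. unfold Gx, Gy, Jp. field. repeat split; lra. }
    rewrite Eq.
    assert (0 < Gf p x k) by (unfold Gf; apply Rdiv_lt_0_compat; pos).
    assert (0 < Gf p x k * Jp p x k / (x*f1 p k*f2 p x k*f3 p x k*f4 p x k*(- Pxf p x k))).
    { apply Rdiv_lt_0_compat; pos. }
    lra.
Qed.

Lemma rho_decr p a b : 0 < p < 1 -> 1 < a -> a < b -> 0 < (1-p)-p*b -> rho p b < rho p a.
Proof.
  intros Hp Ha Hab Hb.
  destruct (MVT_cor2 (rho p) (Derive (rho p)) a b Hab) as (c & Ec & Hc).
  - intros c Hc. apply is_derive_Reals. apply Derive_correct. apply rho_ex; nra.
  - assert (Derive (rho p) c < 0) by (apply derivs_neg; nra). nra.
Qed.

Lemma Phi_decr p a b : 0 < p < 1 -> 1 < a -> a < b -> 0 < (1-p)-p*b -> Phi p b < Phi p a.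
Proof.
  intros Hp Ha Hab Hb.
  destruct (MVT_cor2 (Phi p) (fun k => Gx p (rho p k) k * Derive (rho p) k + Gy p (rho p k) k) a b Hab) as (c & Ec & Hc).
  - intros c Hc. apply is_derive_Reals. apply Phi_deriv; nra.
  - assert (Gx p (rho p c) c * Derive (rho p) c + Gy p (rho p c) c < 0) by (apply derivs_neg; nra). nra.
Qed.
Lemma Pc_alpha p x a : 0 < x -> 0 < a < 1 -> alpha_eq p x a ->
  Pc p x ((a*x+1-a)/(a+x*(1-a))) = 0.
Proof.
  intros Hx Ha He. unfold alpha_eq in He.
  assert (HA: 0 < a + x*(1-a)) by nra.
  assert (HB: 0 < a*x+1-a) by nra.
  assert (HA': a + x - a*x <> 0) by nra.
  assert (HB': a*x + 1 - a <> 0) by nra.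
  assert (E: 2*a*(a+x*(1-a))*(a*x+1-a) - p*(a+x*(1-a))*(a*x+1-a) - p*a*(a*x+1-a) - a*x*(1-p)*(a+x*(1-a)) = 0).
  { rewrite He at 1. field. split; lra. }
  unfold Pc, Mk.
  apply (Rmult_eq_reg_r ((a+x*(1-a))^3)); [|apply pow_nonzero; lra].
  rewrite Rmult_0_l.
  transitivity ((1-x)*(1+x)^2 * (2*a*(a+x*(1-a))*(a*x+1-a) - p*(a+x*(1-a))*(a*x+1-a) - p*a*(a*x+1-a) - a*x*(1-p)*(a+x*(1-a)))).
  - field. lra.
  - rewrite E. ring.
Qed.

Lemma F_id p x a : 0 < p < 1 -> 0 < x -> 0 < a < 1 ->
  q_RB p x a / q_BB p x a = Gf p x ((a*x+1-a)/(a+x*(1-a))).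
Proof.
  intros Hp Hx Ha.
  assert (HA: 0 < a + x*(1-a)) by nra.
  assert (HB: 0 < a*x+1-a) by nra.
  unfold q_RB, q_BB, p_in_BB, p_in_BR, p_in_RR, p_in_RB, p_out_BB, p_out_RB, Gf, f1, f2, f3, f4.
  unfold D_B, D_R in *.
  field.
  assert (0 < 1-a) by lra. assert (0<1-p) by lra.
  replace (x*a+1-a) with (a*x+1-a) by ring.
  set (A := a + x*(1-a)) in *. set (B := a*x+1-a) in *.
  repeat split; apply Rgt_not_eq; apply Rlt_gt.
  all: repeat first [ lra | apply pow_lt | apply Rmult_lt_0_compat | apply Rplus_lt_0_compat ].
Qed.

Lemma k_facts p x a : 0 < p <= /2 -> 0 < x < 1 -> 0 < a < 1 -> alpha_eq p x a ->
  let k := (a*x+1-a)/(a+x*(1-a)) in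
  (p < /2 -> 1 < k /\ 0 < (1-p) - p*k /\ x = rho p k) /\ (p = /2 -> k = 1).
Proof.
  intros Hp Hx Ha He k.
  assert (HA: 0 < a + x*(1-a)) by nra.
  assert (HB: 0 < a*x+1-a) by nra.
  assert (HP := Pc_alpha p x a ltac:(lra) Ha He). fold k in HP.
  assert (Hk0: 0 < k) by (apply Rdiv_lt_0_compat; lra).
  assert (Ek: k*(a+x*(1-a)) = a*x+1-a) by (unfold k; field; lra).
  assert (Hkx: k*x < 1).
  { apply (Rmult_lt_reg_r (a+x*(1-a))); [lra|].
    replace (k*x*(a+x*(1-a))) with ((a*x+1-a)*x) by (rewrite <- Ek; ring).
    assert (0 < a*(1-x^2)) by (apply Rmult_lt_0_compat; nra). lra. }
  assert (Hxk: x < k).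
  { apply (Rmult_lt_reg_r (a+x*(1-a))); [lra|].
    rewrite Ek. assert (0 < (1-a)*(1-x^2)) by (apply Rmult_lt_0_compat; nra). lra. }
  clearbody k.
  rewrite Pc_lin in HP.
  assert (HN: 0 < Nn x k).
  { unfold Nn. apply Rmult_lt_0_compat; nra. }
  assert (HD: 0 < Dd x k).
  { destruct (Rlt_or_le 0 (Dd x k)) as [h|h]; [exact h|]. nra. }
  assert (I2: 2 * Nn x k - Dd x k = - (k-1)*(2*k*(1+x^2) - x*(k-1)^2)) by (unfold Nn, Dd; ring).
  assert (I3: 2 * Nn x k - Dd x k = (2*p-1) * Dd x k) by lra.
  assert (Hk1: 1 <= k).
  { destruct (Rlt_or_le k 1) as [h|h]; [exfalso|exact h].
    assert (0 < 2*k*(1+x^2) - x*(k-1)^2) by nra.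
    assert (0 < - (k-1)*(2*k*(1+x^2) - x*(k-1)^2)) by nra.
    nra. }
  split.
  - intros Hp2.
    assert (Hk: 1 < k).
    { destruct Hk1 as [h|h]; [exact h|]. subst k. exfalso.
      assert (Nn x 1 - p * Dd x 1 = 2*(1-2*p)*(1-x)) by (unfold Nn, Dd; ring). nra. }
    assert (Hc: 0 < (1-p) - p*k).
    { assert (I4: ((1-p) - p*k) * Dd x k = (k+1)*x*k*(k-1)*(1+x)).
      { replace (((1-p) - p*k) * Dd x k) with (Dd x k - (1+k) * (p * Dd x k)) by ring.
        replace (p * Dd x k) with (Nn x k) by lra. unfold Nn, Dd. ring. }
      assert (0 < (k+1)*x*k*(k-1)*(1+x)) by pos.
      destruct (Rlt_or_le 0 ((1-p) - p*k)) as [h|h]; [exact h|]. nra. }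
    split; [exact Hk|]. split; [exact Hc|].
    destruct (rho_facts p k ltac:(lra) Hk Hc) as (_ & _ & Hr & HPr & _).
    set (z := rho p k) in *. clearbody z.
    destruct (Req_dec x z) as [h|h]; [exact h|exfalso].
    assert (HP' : Pc p x k = 0) by (rewrite Pc_lin; lra).
    assert (E1: (x - z) * (k*(1-k)*(x+z) + Mk p k) = 0).
    { replace ((x - z) * (k*(1-k)*(x+z) + Mk p k)) with (Pc p x k - Pc p z k) by (unfold Pc; ring). lra. }
    assert (E2: k*(1-k)*(x+z) + Mk p k = 0).
    { apply Rmult_integral in E1. destruct E1 as [e|e]; [exfalso; apply h; lra|exact e]. }
    assert (E3: k*(1-k)*x*z = 2*k*((1-p)-p*k)).
    { assert (Pc p x k = - (k*(1-k)*x*z) + 2*k*((1-p)-p*k) + x*(k*(1-k)*(x+z) + Mk p k)) by (unfold Pc; ring).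
      rewrite E2 in H. lra. }
    assert (0 < k*(k-1)*x*z) by pos.
    assert (0 < 2*k*((1-p)-p*k)) by pos.
    lra.
  - intros Hp2. destruct Hk1 as [h|h]; [exfalso|lra].
    assert (0 < 2*k*(1+x^2) - x*(k-1)^2).
    { assert (x*(k-1)^2 < k) by nra. nra. }
    assert (- (k-1)*(2*k*(1+x^2) - x*(k-1)^2) < 0) by nra.
    rewrite Hp2 in I3. lra.
Qed.

Lemma Gf_one p k : 0 < p < 1 -> 0 < k -> Gf p 1 k = 1.
Proof.
  intros Hp Hk. destruct (f_pos p 1 k Hp ltac:(lra) Hk) as (F1 & F2 & F3 & F4).
  unfold Gf in *. unfold f1, f2, f3, f4 in *. field. split; lra.
Qed.

Lemma Gf_lt_one p x k : 0 < p < 1 -> 0 < x < 1 -> 0 < k -> k*x < 1 -> Gf p x k < 1.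
Proof.
  intros Hp Hx Hk Hkx. destruct (f_pos p x k Hp ltac:(lra) Hk) as (F1 & F2 & F3 & F4).
  assert (E: 1 - Gf p x k = p*(1-p)*k*(1-x^2)*(1-x*k)/(f3 p x k * f4 p x k)).
  { unfold Gf. unfold f1, f2, f3, f4 in *. field. split; lra. }
  assert (0 < p*(1-p)*k*(1-x^2)*(1-x*k)/(f3 p x k * f4 p x k)).
  { apply Rdiv_lt_0_compat; [|pos]. apply Rmult_lt_0_compat; [|lra]. apply Rmult_lt_0_compat; [pos|nra]. }
  lra.
Qed.

Lemma Gf_half x : 0 < x -> Gf (/2) x 1 = 2*x/(1+x^2).
Proof.
  intros Hx. unfold Gf, f1, f2, f3, f4. field. repeat split; nra.
Qed.

Lemma k_one a : 0 < a < 1 -> (a*1+1-a)/(a+1*(1-a)) = 1.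
Proof. intros. field. lra. Qed.

Theorem proposition2 (r : R) (alpha : R -> R)
  (hr0 : 0 < r) (hr1 : r <= / 2)
  (halpha_range : forall x, 0 < x <= 1 -> 0 < alpha x < 1)
  (halpha_eq : forall x, 0 < x <= 1 -> alpha_eq r x (alpha x)) :
  forall t : nat, (1 <= t)%nat ->
    (forall x y, 0 < x <= 1 -> 0 < y <= 1 -> x < y -> F t r alpha x < F t r alpha y)
    /\ F t r alpha 1 = 1.
Proof.
  intros t _.
  assert (Hr: 0 < r < 1) by lra.
  assert (Hval: forall x, 0 < x <= 1 -> F t r alpha x = Gf r x ((alpha x*x+1-alpha x)/(alpha x+x*(1-alpha x)))).
  { intros x Hx. unfold F. apply F_id; auto; try lra. }
  assert (H1: F t r alpha 1 = 1).
  { rewrite Hval by lra. rewrite k_one by (apply halpha_range; lra). apply Gf_one; lra. }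
  split; [|exact H1].
  intros x y Hx Hy Hxy.
  assert (Hx1: 0 < x < 1) by lra.
  destruct (halpha_range x Hx) as [Ha0 Ha1].
  destruct (k_facts r x (alpha x) ltac:(lra) Hx1 (halpha_range x Hx) (halpha_eq x Hx)) as [Kx Kx'].
  destruct (Rle_lt_or_eq_dec _ _ (proj2 Hy)) as [Hy1|Hy1].
  2:{ subst y. rewrite H1. rewrite Hval by lra.
      set (a := alpha x) in *. set (k := (a*x+1-a)/(a+x*(1-a))) in *.
      assert (HA: 0 < a + x*(1-a)) by nra.
      assert (HB: 0 < a*x+1-a) by nra.
      assert (Hk0: 0 < k) by (apply Rdiv_lt_0_compat; lra).
      assert (Ek: k*(a+x*(1-a)) = a*x+1-a) by (unfold k; field; lra).
      assert (Hkx: k*x < 1).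
      { apply (Rmult_lt_reg_r (a+x*(1-a))); [lra|].
        replace (k*x*(a+x*(1-a))) with ((a*x+1-a)*x) by (rewrite <- Ek; ring).
        assert (0 < a*(1-x^2)) by (apply Rmult_lt_0_compat; nra). lra. }
      apply Gf_lt_one; lra. }
  assert (Hy1': 0 < y < 1) by lra.
  destruct (k_facts r y (alpha y) ltac:(lra) Hy1' (halpha_range y Hy) (halpha_eq y Hy)) as [Ky Ky'].
  rewrite (Hval x Hx), (Hval y Hy).
  set (kx := (alpha x*x+1-alpha x)/(alpha x+x*(1-alpha x))) in *.
  set (ky := (alpha y*y+1-alpha y)/(alpha y+y*(1-alpha y))) in *.
  clearbody kx ky.
  destruct (Rlt_or_le r (/2)) as [Hr2|Hr2].
  - destruct (Kx Hr2) as (Hkx & Hcx & Ex). destruct (Ky Hr2) as (Hky & Hcy & Ey).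
    assert (Hk: ky < kx).
    { destruct (Rlt_or_le ky kx) as [h|h]; [exact h|exfalso].
      destruct h as [h|h].
      - assert (rho r ky < rho r kx) by (apply rho_decr; lra). lra.
      - subst. lra. }
    assert (Phi r kx < Phi r ky) by (apply Phi_decr; lra).
    unfold Phi in H. rewrite <- Ex, <- Ey in H. exact H.
  - assert (Hrh: r = /2) by lra.
    rewrite (Kx' Hrh), (Ky' Hrh), Hrh.
    rewrite !Gf_half by lra.
    apply (Rmult_lt_reg_r ((1+x^2)*(1+y^2))); [pos|].
    field_simplify; [|nra|nra].
    assert (0 < (y-x)*(1-x*y)) by (apply Rmult_lt_0_compat; nra). lra.
Qed.
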